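(* Fix $\beta\in\mathbb{R}^p$ and treat the indicator $f$ as a known fixed function. Consider the functional \[ M_\ell(\beta)=\mathbb{E}\Big[g(X)\big\{\tau_\ell(X)f(X)+(b-a)f(X)+a-b-m(X;\beta)\big\}\Big],\qquad X=(V,W), \] viewed as a functional of the (nonparametric) distribution of the data. Its influence function is \begin{align*} \varphi(Z;\beta,\eta)=\;&\Big\{\frac{EA}{\pi_1(V)}\big(Y-\mu_1(V)\big)-\frac{E(1-A)}{\pi_0(V)}\big(Y-\mu_0(V)\big)\Big\}\sum_{w}g(V,w)f(V,w)\\ &+\frac{(b-a)(1-E)}{\rho_0(V)}\Big\{g(V,W)f(V,W)-\sum_{w}g(V,w)f(V,w)\nu(V,w)\Big\}\\ &-\frac{1-E}{\rho_0(V)}\Big\{g(V,W)f(V,W)\tau_\ell(V,W)-\sum_{w}g(V,w)f(V,w)\tau_\ell(V,w)\nu(V,w)\Big\}\\ &+g(X)\big\{\tau_\ell(X)f(X)+(b-a)f(X)+a-b-m(X;\beta)\big\}, \end{align*} where the sums run over the (finite) support of $W$. In particular, for the linear model $m(v,w;\beta)=\beta_1^\top v+\beta_2^\top w$ with $h\equiv 1$, one takes $g(v,w)=(v,w)^\top$.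
   Context: Setup: random variables $V$, $W$ (finitely many values), $E\in\{0,1\}$ ($E=1$ study, $E=0$ target), $A\in\{0,1\}$, potential outcomes $Y^1,Y^0\in[a,b]$, $Y=Y^A$, with $A\perp\!\!\!\perp(Y^0,Y^1)\mid V,E=1$, positivity, $\mathbb{P}(W=w\mid V,E=1)=\mathbb{P}(W=w\mid V,E=0)$ and equal conditional effects $\mathbb{E}(Y^1-Y^0\mid V,W,E)$ across $E$. Data $Z=(V,E,W,A,Y)$. Nuisances $\eta$: $\mu_{a'}(v)=\mathbb{E}(Y\mid V=v,A=a',E=1)$; $\nu(v,w)=\mathbb{P}(W=w\mid V=v,E=0)$; $\pi_{a'}(V)=\mathbb{P}(A=a',E=1\mid V)$ for $a'\in\{0,1\}$; $\rho_0(V)=\mathbb{P}(E=0\mid V)$; $\tau_\ell(v,w)=\frac{\mu_1(v)-\mu_0(v)-(b-a)(1-\nu(v,w))}{\nu(v,w)}$; $f(v,w)=\mathbf{1}(\tau_\ell(v,w)+b-a\ge 0)$. The lower bound $\gamma_\ell=\max\{\tau_\ell,a-b\}$ is approximated by a model $m(x;\beta)$, $\beta\in\mathbb{R}^p$ ($p$ fixed), with $\beta=\arg\min_\theta \mathbb{E}[h(X)\{\gamma_\ell(X)-m(X;\theta)\}^2]$ for an analyst-chosen weight $h$; $g(x)=h(x)\,\partial m(x;\beta)/\partial\beta$. The moment condition is $M_\ell(\beta)=0$. All nuisances are assumed bounded away from $0$. *)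

(* Defs.v *)
From HB Require Import structures.
From mathcomp Require Import all_boot all_order all_algebra.
From mathcomp Require Import all_classical all_reals all_analysis.
Set Implicit Arguments. Unset Strict Implicit. Unset Printing Implicit Defensive.
Import Order.TTheory GRing.Theory Num.Theory.
Import numFieldNormedType.Exports.
Local Open Scope classical_set_scope.
Local Open Scope ring_scope.

Record data (R : realType) (T : Type) (Vt Wt : finType) := Data {
  Vr : T -> Vt; Er : T -> bool; Wr : T -> Wt; Ar : T -> bool; Yr : T -> R }.

Definition Ex d (T : measurableType d) (R : realType) (P : probability T R)
  (h : T -> R) : R := \int[P]_(x in setT) h x.

(* Expectation operator of the mixture (1-t) P + t Q (linear in the measure). *)
Definition mixEx d (T : measurableType d) (R : realType) (P Q : probability T R)
  (t : R) (h : T -> R) : R := (1 - t) * Ex P h + t * Ex Q h.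

Section Nuisances.
Variables (R : realType) (T : Type) (Vt Wt : finType).
Variables (ex : (T -> R) -> R) (D : data R T Vt Wt) (a b : R).

Definition cellA (v : Vt) (a' : bool) (t : T) : R :=
  ((Vr D t == v) && (Ar D t == a') && Er D t)%:R.
Definition cellV (v : Vt) (t : T) : R := (Vr D t == v)%:R.
Definition cellV0 (v : Vt) (t : T) : R := ((Vr D t == v) && ~~ Er D t)%:R.
Definition cellV1 (v : Vt) (t : T) : R := ((Vr D t == v) && Er D t)%:R.
Definition cellVW1 (v : Vt) (w : Wt) (t : T) : R :=
  ((Vr D t == v) && (Wr D t == w) && Er D t)%:R.
Definition cellVW0 (v : Vt) (w : Wt) (t : T) : R :=
  ((Vr D t == v) && (Wr D t == w) && ~~ Er D t)%:R.

Definition mu (a' : bool) (v : Vt) : R :=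
  ex (fun t => Yr D t * cellA v a' t) / ex (cellA v a').
Definition nu (v : Vt) (w : Wt) : R := ex (cellVW0 v w) / ex (cellV0 v).
Definition pi (a' : bool) (v : Vt) : R := ex (cellA v a') / ex (cellV v).
Definition rho0 (v : Vt) : R := ex (cellV0 v) / ex (cellV v).
Definition tauL (v : Vt) (w : Wt) : R :=
  (mu true v - mu false v - (b - a) * (1 - nu v w)) / nu v w.
Definition findic (v : Vt) (w : Wt) : R :=
  if 0 <= tauL v w + (b - a) then 1 else 0.

Variables (g f m : Vt -> Wt -> R).

Definition Mfun : R :=
  ex (fun t => let v := Vr D t in let w := Wr D t in
     g v w * (tauL v w * f v w + (b - a) * f v w + a - b - m v w)).

Definition phi (t : T) : R :=
  let v := Vr D t in let w := Wr D t in
  let e := (Er D t)%:R in let A := (Ar D t)%:R in let y := Yr D t in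
  (e * A / pi true v * (y - mu true v)
     - e * (1 - A) / pi false v * (y - mu false v))
    * (\sum_(w' : Wt) g v w' * f v w')
  + (b - a) * (1 - e) / rho0 v
    * (g v w * f v w - \sum_(w' : Wt) g v w' * f v w' * nu v w')
  - (1 - e) / rho0 v
    * (g v w * f v w * tauL v w
       - \sum_(w' : Wt) g v w' * f v w' * tauL v w' * nu v w')
  + g v w * (tauL v w * f v w + (b - a) * f v w + a - b - m v w).

End Nuisances.

Definition gcomp (R : realType) (Vt Wt : finType) (p : nat)
  (h : Vt -> Wt -> R) (mm : 'rV[R]_p -> Vt -> Wt -> R) (beta : 'rV[R]_p)
  (i : 'I_p) (v : Vt) (w : Wt) : R :=
  h v w * 'D_(\row_(j < p) (j == i)%:R) (fun th => mm th v w) beta.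

(* Main.v *)
Require Import Defs.
From HB Require Import structures.
From mathcomp Require Import all_boot all_order all_algebra.
From mathcomp Require Import all_classical all_reals all_analysis.
From mathcomp Require Import ring lra measurable_realfun.
Import Order.TTheory GRing.Theory Num.Theory.
Import numFieldNormedType.Exports.
Local Open Scope classical_set_scope.
Local Open Scope ring_scope.
Set Implicit Arguments. Unset Strict Implicit. Unset Printing Implicit Defensive.
Definition gd {d} {T : measurableType d} {R : realType} (h : T -> R) :=
  measurable_fun setT h /\ exists M : R, forall t, `|h t| <= M.

Lemma bnd_of d (T : measurableType d) (R : realType) (h : T -> R) M : (forall t, `|h t| <= M) -> [bounded h x | x in setT].
Proof.
move=> hM; rewrite /bounded_near; near=> M' => t _ /=.
apply: le_trans (hM t) _; near: M'; exact: nbhs_pinfty_ge (num_real M).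
Unshelve. all: end_near. Qed.

Lemma gd_int d (T : measurableType d) (R : realType) (P : probability T R) (h : T -> R) :
  gd h -> P.-integrable setT (EFin \o h).
Proof.
case=> mh [M hM]; apply: measurable_bounded_integrable => //.
  by apply: (le_lt_trans (probability_le1 P measurableT)); rewrite ltey.
rewrite /bounded_near; near=> M' => t _ /=.
apply: le_trans (hM t) _; near: M'; exact: nbhs_pinfty_ge (num_real M).
Unshelve. all: end_near.
Qed.

Lemma gd_add d (T : measurableType d) (R : realType) (h1 h2 : T -> R) :
  gd h1 -> gd h2 -> gd (fun t => h1 t + h2 t).
Proof.
case=> m1 [M1 b1] [m2 [M2 b2]]; split; first exact: measurable_funD.
exists (M1 + M2) => t; apply: (le_trans (ler_normD _ _)); exact: lerD.
Qed.

Lemma gd_mul d (T : measurableType d) (R : realType) (h1 h2 : T -> R) :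
  gd h1 -> gd h2 -> gd (fun t => h1 t * h2 t).
Proof.
case=> m1 [M1 b1] [m2 [M2 b2]]; split; first exact: measurable_funM.
exists (M1 * M2) => t; rewrite normrM; apply: ler_pM => //.
Qed.

Lemma gd_cst d (T : measurableType d) (R : realType) (c : R) :
  gd (fun _ : T => c).
Proof. by split; [exact: measurable_cst | exists `|c|]. Qed.

Lemma gd_opp d (T : measurableType d) (R : realType) (h : T -> R) :
  gd h -> gd (fun t => - h t).
Proof.
case=> m [M b]; split; first exact: measurableT_comp.
by exists M => t; rewrite normrN.
Qed.

Lemma gd_sub d (T : measurableType d) (R : realType) (h1 h2 : T -> R) :
  gd h1 -> gd h2 -> gd (fun t => h1 t - h2 t).
Proof. by move=> g1 g2; apply: gd_add => //; exact: gd_opp. Qed.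

Lemma gd_bool d (T : measurableType d) (R : realType) (B : T -> bool) :
  measurable [set t | B t] -> gd (fun t => (B t)%:R : R).
Proof.
move=> mB; split.
  rewrite (_ : (fun t => _) = \1_[set t | B t]); first exact: measurable_indic.
  apply/funext => t; rewrite indicE; case: (boolP (B t)) => Bt.
    by rewrite mem_set.
  by rewrite memNset //= ; apply/negP.
by exists 1 => t; case: (B t); rewrite ?normr1 ?normr0.
Qed.

Lemma ExD d (T : measurableType d) (R : realType) (P : probability T R) (h1 h2 : T -> R) :
  gd h1 -> gd h2 -> Ex P (fun t => h1 t + h2 t) = Ex P h1 + Ex P h2.
Proof. by move=> g1 g2; rewrite /Ex RintegralD //; exact: gd_int. Qed.

Lemma ExB d (T : measurableType d) (R : realType) (P : probability T R) (h1 h2 : T -> R) :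
  gd h1 -> gd h2 -> Ex P (fun t => h1 t - h2 t) = Ex P h1 - Ex P h2.
Proof. by move=> g1 g2; rewrite /Ex RintegralB //; exact: gd_int. Qed.

Lemma ExZ d (T : measurableType d) (R : realType) (P : probability T R) (c : R) (h : T -> R) :
  gd h -> Ex P (fun t => c * h t) = c * Ex P h.
Proof. by move=> g; rewrite /Ex RintegralZl //; exact: gd_int. Qed.

Lemma Ex0 d (T : measurableType d) (R : realType) (P : probability T R) :
  Ex P (fun _ => 0) = 0.
Proof. by rewrite /Ex Rintegral_cst // mul0r. Qed.

Lemma gd_sum d (T : measurableType d) (R : realType) (I : Type) (r : seq I)
  (F : I -> T -> R) : (forall i, gd (F i)) -> gd (fun t => \sum_(i <- r) F i t).
Proof.
move=> gF; elim: r => [|i r IH].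
  by under eq_fun do rewrite big_nil; exact: gd_cst.
by under eq_fun do rewrite big_cons; exact: gd_add.
Qed.

Lemma Ex_sum d (T : measurableType d) (R : realType) (P : probability T R) (I : Type) (r : seq I)
  (F : I -> T -> R) : (forall i, gd (F i)) ->
  Ex P (fun t => \sum_(i <- r) F i t) = \sum_(i <- r) Ex P (F i).
Proof.
move=> gF; elim: r => [|i r IH].
  by under eq_fun do rewrite big_nil; rewrite big_nil Ex0.
under eq_fun do rewrite big_cons; rewrite big_cons ExD ?IH //.
exact: gd_sum.
Qed.

Lemma Ex_sumF d (T : measurableType d) (R : realType) (P : probability T R) (I : finType)
  (F : I -> T -> R) : (forall i, gd (F i)) ->
  Ex P (fun t => \sum_(i : I) F i t) = \sum_(i : I) Ex P (F i).
Proof. move=> gF; exact: (Ex_sum P (index_enum I) gF). Qed.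

Lemma gd_sumF d (T : measurableType d) (R : realType) (I : finType)
  (F : I -> T -> R) : (forall i, gd (F i)) -> gd (fun t => \sum_(i : I) F i t).
Proof. move=> gF; exact: (gd_sum (index_enum I) gF). Qed.
Definition cellVW (R : realType) (T : Type) (Vt Wt : finType) (D : data R T Vt Wt)
  (v : Vt) (w : Wt) (t : T) : R := ((Vr D t == v) && (Wr D t == w))%:R.

Lemma sum_ind (R : realType) (I : finType) (x : I) (F : I -> R) :
  \sum_(i : I) (x == i)%:R * F i = F x.
Proof.
rewrite (bigD1 x) //= eqxx mul1r big1 ?addr0 // => i /negbTE.
by rewrite eq_sym => ->; rewrite mul0r.
Qed.

Lemma natb_and (R : realType) (b1 b2 : bool) : ((b1 && b2)%:R : R) = b1%:R * b2%:R.
Proof. by case: b1; case: b2; rewrite /= ?mulr1 ?mulr0 ?mul0r. Qed.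

Lemma mb_and d (T : measurableType d) (B1 B2 : T -> bool) :
  measurable [set t | B1 t] -> measurable [set t | B2 t] ->
  measurable [set t | B1 t && B2 t].
Proof.
move=> m1 m2; rewrite (_ : [set t | _] = [set t | B1 t] `&` [set t | B2 t]).
  exact: measurableI.
by apply/seteqP; split => t /=; [move/andP | move=> [-> ->]].
Qed.

Lemma mb_eq d (T : measurableType d) (U : eqType) (X : T -> U) (x : U) :
  measurable (X @^-1` [set x]) -> measurable [set t | X t == x].
Proof.
move=> m; rewrite (_ : [set t | _] = X @^-1` [set x]) //.
by apply/seteqP; split => t /=; [move/eqP | move=> ->].
Qed.

Lemma mb_b d (T : measurableType d) (X : T -> bool) :
  measurable (X @^-1` [set true]) -> measurable [set t | X t].
Proof.
move=> m; by rewrite (_ : [set t | _] = X @^-1` [set true]).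
Qed.

Lemma mb_nb d (T : measurableType d) (X : T -> bool) :
  measurable (X @^-1` [set false]) -> measurable [set t | ~~ X t].
Proof.
move=> m; rewrite (_ : [set t | _] = X @^-1` [set false]) //.
by apply/seteqP; split => t /=; [move/negbTE | move=> ->].
Qed.

Definition mble (R : realType) d (T : measurableType d) (Vt Wt : finType)
  (D : data R T Vt Wt) :=
  [/\ (forall v, measurable (Vr D @^-1` [set v])),
      (forall w, measurable (Wr D @^-1` [set w])),
      (forall e, measurable (Er D @^-1` [set e])),
      (forall a', measurable (Ar D @^-1` [set a'])) &
      (measurable_fun setT (Yr D) /\ exists M : R, forall t, `|Yr D t| <= M)].

Lemma gd_cellA (R : realType) d (T : measurableType d) (Vt Wt : finType)
  (D : data R T Vt Wt) v a' : mble D -> gd (cellA D v a').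
Proof.
case=> hV hW hE hA _; apply: gd_bool.
by apply: mb_and; [apply: mb_and|]; [apply: mb_eq|apply: mb_eq|apply: mb_b].
Qed.
Lemma gd_Y (R : realType) d (T : measurableType d) (Vt Wt : finType)
  (D : data R T Vt Wt) : mble D -> gd (Yr D).
Proof. by case=> _ _ _ _ []. Qed.
Lemma gd_YcellA (R : realType) d (T : measurableType d) (Vt Wt : finType)
  (D : data R T Vt Wt) v a' : mble D -> gd (fun t => Yr D t * cellA D v a' t).
Proof. by move=> m; apply: gd_mul; [exact: gd_Y | exact: gd_cellA]. Qed.
Lemma gd_cellV (R : realType) d (T : measurableType d) (Vt Wt : finType)
  (D : data R T Vt Wt) v : mble D -> gd (cellV D v).
Proof. by case=> hV hW hE hA _; apply: gd_bool; apply: mb_eq. Qed.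
Lemma gd_cellV0 (R : realType) d (T : measurableType d) (Vt Wt : finType)
  (D : data R T Vt Wt) v : mble D -> gd (cellV0 D v).
Proof. by case=> hV hW hE hA _; apply: gd_bool; apply: mb_and; [apply: mb_eq|apply: mb_nb]. Qed.
Lemma gd_cellV1 (R : realType) d (T : measurableType d) (Vt Wt : finType)
  (D : data R T Vt Wt) v : mble D -> gd (cellV1 D v).
Proof. by case=> hV hW hE hA _; apply: gd_bool; apply: mb_and; [apply: mb_eq|apply: mb_b]. Qed.
Lemma gd_cellVW0 (R : realType) d (T : measurableType d) (Vt Wt : finType)
  (D : data R T Vt Wt) v w : mble D -> gd (cellVW0 D v w).
Proof.
case=> hV hW hE hA _; apply: gd_bool.
by apply: mb_and; [apply: mb_and|]; [apply: mb_eq|apply: mb_eq|apply: mb_nb].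
Qed.
Lemma gd_cellVW1 (R : realType) d (T : measurableType d) (Vt Wt : finType)
  (D : data R T Vt Wt) v w : mble D -> gd (cellVW1 D v w).
Proof.
case=> hV hW hE hA _; apply: gd_bool.
by apply: mb_and; [apply: mb_and|]; [apply: mb_eq|apply: mb_eq|apply: mb_b].
Qed.
Lemma gd_cellVW (R : realType) d (T : measurableType d) (Vt Wt : finType)
  (D : data R T Vt Wt) v w : mble D -> gd (cellVW D v w).
Proof.
by case=> hV hW hE hA _; apply: gd_bool; apply: mb_and; apply: mb_eq.
Qed.
Lemma Ghat_pt (R : realType) (T : Type) (Vt Wt : finType) (D : data R T Vt Wt)
  (G : Vt -> Wt -> R) t :
  G (Vr D t) (Wr D t) = \sum_(v : Vt) \sum_(w : Wt) G v w * cellVW D v w t.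
Proof.
transitivity (\sum_(v : Vt) (Vr D t == v)%:R * \sum_(w : Wt) (Wr D t == w)%:R * G v w).
  by rewrite sum_ind sum_ind.
apply: eq_bigr => v _; rewrite mulr_sumr; apply: eq_bigr => w _.
rewrite /cellVW natb_and; ring.
Qed.

Definition Kc (R : realType) (T : Type) (Vt Wt : finType) (ex : (T -> R) -> R)
  (D : data R T Vt Wt) (a b : R) (g f : Vt -> Wt -> R) v w :=
  (b - a) * (g v w * f v w) - g v w * f v w * tauL ex D a b v w.
Definition Gh (R : realType) (T : Type) (Vt Wt : finType) (ex : (T -> R) -> R)
  (D : data R T Vt Wt) (a b : R) (g f m : Vt -> Wt -> R) v w :=
  g v w * (tauL ex D a b v w * f v w + (b - a) * f v w + a - b - m v w).
Definition phiT (R : realType) (T : Type) (Vt Wt : finType) (ex : (T -> R) -> R)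
  (D : data R T Vt Wt) (a b : R) (g f m : Vt -> Wt -> R) v w t :=
   g v w * f v w * (cellA D v true t * (Yr D t - mu ex D true v) / Defs.pi ex D true v
                    - cellA D v false t * (Yr D t - mu ex D false v) / Defs.pi ex D false v)
 + Kc ex D a b g f v w / rho0 ex D v * (cellVW0 D v w t - nu ex D v w * cellV0 D v t)
 + Gh ex D a b g f m v w * cellVW D v w t.

Lemma Mfun_pt (R : realType) (T : Type) (Vt Wt : finType) (ex : (T -> R) -> R)
  (D : data R T Vt Wt) (a b : R) (g f m : Vt -> Wt -> R) :
  Mfun ex D a b g f m =
  ex (fun t => \sum_(v : Vt) \sum_(w : Wt) Gh ex D a b g f m v w * cellVW D v w t).
Proof.
rewrite /Mfun; congr ex; apply/funext => t.
exact: (Ghat_pt D (Gh ex D a b g f m) t).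
Qed.

Lemma phi_pt (R : realType) (T : Type) (Vt Wt : finType) (ex : (T -> R) -> R)
  (D : data R T Vt Wt) (a b : R) (g f m : Vt -> Wt -> R) t :
  phi ex D a b g f m t = \sum_(v : Vt) \sum_(w : Wt) phiT ex D a b g f m v w t.
Proof.
set v0 := Vr D t; set w0 := Wr D t.
set ne : R := (~~ Er D t)%:R.
set c1 : R := ((Ar D t == true) && Er D t)%:R.
set c0 : R := ((Ar D t == false) && Er D t)%:R.
set X := fun v w => g v w * f v w * (c1 * (Yr D t - mu ex D true v) / Defs.pi ex D true v
                    - c0 * (Yr D t - mu ex D false v) / Defs.pi ex D false v)
   + Kc ex D a b g f v w / rho0 ex D v * ((w0 == w)%:R * ne - nu ex D v w * ne)
   + Gh ex D a b g f m v w * (w0 == w)%:R.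
transitivity (\sum_(v : Vt) (v0 == v)%:R * \sum_(w : Wt) X v w); last first.
  apply: eq_bigr => v _; rewrite mulr_sumr; apply: eq_bigr => w _.
  rewrite /phiT /X /cellA /cellVW0 /cellV0 /cellVW -/v0 -/w0.
  rewrite [((_ == v) && _ && _)%:R]natb_and [((_ == v) && _)%:R]natb_and.
  rewrite [((_ == v) && (_ == false) && _)%:R]natb_and [((_ == v) && (_ == false))%:R]natb_and.
  rewrite [((_ == v) && (_ == w) && _)%:R]natb_and [((_ == v) && (_ == w))%:R]natb_and.
  rewrite [((_ == v) && ~~ _)%:R]natb_and.
  rewrite /c1 /c0 /ne !natb_and; ring.
rewrite sum_ind.
pose C1 := c1 * (Yr D t - mu ex D true v0) / Defs.pi ex D true v0
                    - c0 * (Yr D t - mu ex D false v0) / Defs.pi ex D false v0.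
transitivity (\sum_(w : Wt) (g v0 w * f v0 w * C1
   + (w0 == w)%:R * (Kc ex D a b g f v0 w * ne / rho0 ex D v0 + Gh ex D a b g f m v0 w)
   - ne / rho0 ex D v0 * ((b - a) * (g v0 w * f v0 w * nu ex D v0 w)
                        - g v0 w * f v0 w * tauL ex D a b v0 w * nu ex D v0 w))); last first.
  by apply: eq_bigr => w _; rewrite /X /C1 /Kc; ring.
rewrite sumrB big_split /= -mulr_suml sum_ind -mulr_sumr sumrB -mulr_sumr.
rewrite /phi -/v0 -/w0 /C1 /Kc /Gh /c1 /c0 /ne.
case: (Er D t); case: (Ar D t) => /=; ring.
Qed.
Lemma Ex_lin7 d (T : measurableType d) (R : realType) (P : probability T R)
  (c1 c2 c3 c4 c5 c6 c7 : R) (h1 h2 h3 h4 h5 h6 h7 : T -> R) :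
  gd h1 -> gd h2 -> gd h3 -> gd h4 -> gd h5 -> gd h6 -> gd h7 ->
  Ex P (fun t => c1 * h1 t + c2 * h2 t + c3 * h3 t + c4 * h4 t + c5 * h5 t
                 + c6 * h6 t + c7 * h7 t) =
  c1 * Ex P h1 + c2 * Ex P h2 + c3 * Ex P h3 + c4 * Ex P h4 + c5 * Ex P h5
  + c6 * Ex P h6 + c7 * Ex P h7.
Proof.
move=> g1 g2 g3 g4 g5 g6 g7.
have gZ : forall c (h : T -> R), gd h -> gd (fun t => c * h t).
  by move=> c h gh; apply: gd_mul => //; exact: gd_cst.
rewrite ExD; last 2 first.
- by repeat apply: gd_add; apply: gZ.
- exact: gZ.
rewrite ExD; last 2 first.
- by repeat apply: gd_add; apply: gZ.
- exact: gZ.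
rewrite ExD; last 2 first.
- by repeat apply: gd_add; apply: gZ.
- exact: gZ.
rewrite ExD; last 2 first.
- by repeat apply: gd_add; apply: gZ.
- exact: gZ.
rewrite ExD; last 2 first.
- by repeat apply: gd_add; apply: gZ.
- exact: gZ.
rewrite ExD; last 2 first.
- by repeat apply: gd_add; apply: gZ.
- exact: gZ.
by rewrite !ExZ.
Qed.

Definition phiL (R : realType) d (T : measurableType d) (Vt Wt : finType)
  (ex : (T -> R) -> R) (Px : probability T R)
  (D : data R T Vt Wt) (a b : R) (g f m : Vt -> Wt -> R) :=
  \sum_(v : Vt) \sum_(w : Wt)
   (g v w * f v w * ((Ex Px (fun t => Yr D t * cellA D v true t)
                      - mu ex D true v * Ex Px (cellA D v true)) / Defs.pi ex D true v
                    - (Ex Px (fun t => Yr D t * cellA D v false t)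
                      - mu ex D false v * Ex Px (cellA D v false)) / Defs.pi ex D false v)
   + Kc ex D a b g f v w / rho0 ex D v * (Ex Px (cellVW0 D v w) - nu ex D v w * Ex Px (cellV0 D v))
   + Gh ex D a b g f m v w * Ex Px (cellVW D v w)).

Lemma Ex_phi (R : realType) d (T : measurableType d) (Vt Wt : finType)
  (ex : (T -> R) -> R) (Px : probability T R)
  (D : data R T Vt Wt) (a b : R) (g f m : Vt -> Wt -> R) : mble D ->
  Ex Px (phi ex D a b g f m) = phiL ex Px D a b g f m.
Proof.
move=> mD.
have -> : phi ex D a b g f m = fun t => \sum_(v : Vt) \sum_(w : Wt) phiT ex D a b g f m v w t.
  by apply/funext => t; exact: phi_pt.
have gT : forall v w, gd (phiT ex D a b g f m v w).
  move=> v w; rewrite /phiT.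
  repeat (apply: gd_add || apply: gd_sub || apply: gd_opp || apply: gd_mul);
    try exact: gd_cst;
    try exact: gd_Y; try exact: gd_cellA; try exact: gd_cellV0;
    try exact: gd_cellVW0; try exact: gd_cellVW.
rewrite Ex_sumF; last first.
  by move=> v; apply: gd_sumF => w; exact: gT.
rewrite /phiL; apply: eq_bigr => v _.
rewrite Ex_sumF //; apply: eq_bigr => w _.
set k1 := g v w * f v w / Defs.pi ex D true v.
set k0 := g v w * f v w / Defs.pi ex D false v.
set kk := Kc ex D a b g f v w / rho0 ex D v.
set gh := Gh ex D a b g f m v w.
have -> : phiT ex D a b g f m v w = fun t =>
   k1 * (Yr D t * cellA D v true t) + (- k1 * mu ex D true v) * cellA D v true t
 + (- k0) * (Yr D t * cellA D v false t) + (k0 * mu ex D false v) * cellA D v false t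
 + kk * cellVW0 D v w t + (- kk * nu ex D v w) * cellV0 D v t
 + gh * cellVW D v w t.
  apply/funext => t; rewrite /phiT -/gh /k1 /k0 /kk; ring.
rewrite Ex_lin7; try exact: gd_YcellA; try exact: gd_cellA; try exact: gd_cellVW0;
  try exact: gd_cellV0; try exact: gd_cellVW.
rewrite /k1 /k0 /kk /gh; ring.
Qed.
Lemma Dlim (R : realType) (F : R -> R) (L c : R) :
  is_derive (0:R) (1:R) F L -> F 0 = c -> (fun t => (F t - c) / t) @ 0^'+ --> L.
Proof.
move=> [dF <-] <-.
have H : (fun t => (F t - F 0) / t) @ 0^' --> 'D_1 F 0.
  have -> : (fun t => (F t - F 0) / t) =
            (fun h => h^-1 *: ((F \o shift 0) (h *: 1) - F 0)).
    apply/funext => h /=; rewrite addr0 [h *: 1]mulr1 mulrC //.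
  exact: dF.
move=> A /H; apply: (@within_subset R (fun u : R => 0 < u) (fun u => u != 0)).
by move=> u /= /gt_eqF ->.
Qed.
Lemma DD (R : realType) (u w : R -> R) du dw :
  is_derive (0:R) (1:R) u du -> is_derive (0:R) (1:R) w dw ->
  is_derive (0:R) (1:R) (fun t => u t + w t) (du + dw).
Proof. move=> hu hw; exact: is_deriveD. Qed.

Lemma DN (R : realType) (u : R -> R) du :
  is_derive (0:R) (1:R) u du -> is_derive (0:R) (1:R) (fun t => - u t) (- du).
Proof. move=> hu; exact: is_deriveN. Qed.

Lemma DB (R : realType) (u w : R -> R) du dw :
  is_derive (0:R) (1:R) u du -> is_derive (0:R) (1:R) w dw ->
  is_derive (0:R) (1:R) (fun t => u t - w t) (du - dw).
Proof. by move=> hu hw; apply: DD => //; exact: DN. Qed.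

Lemma DM (R : realType) (u w : R -> R) du dw :
  is_derive (0:R) (1:R) u du -> is_derive (0:R) (1:R) w dw ->
  is_derive (0:R) (1:R) (fun t => u t * w t) (u 0 * dw + w 0 * du).
Proof. move=> hu hw; exact: is_deriveM. Qed.

Lemma Dc (R : realType) (c : R) : is_derive (0:R) (1:R) (fun _ => c) 0.
Proof. exact: is_derive_cst. Qed.

Lemma Did (R : realType) : is_derive (0:R) (1:R) (fun t => t) 1.
Proof. exact: is_derive_id. Qed.

Lemma DV (R : realType) (u : R -> R) du :
  u 0 != 0 -> is_derive (0:R) (1:R) u du ->
  is_derive (0:R) (1:R) (fun t => (u t)^-1) (- (u 0) ^-2 * du).
Proof.
move=> u0 [hu hdu]; split; first exact: derivableV.
by rewrite deriveV // hdu.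
Qed.

Lemma Deq (R : realType) (u w : R -> R) du dw :
  is_derive (0:R) (1:R) u du -> u = w -> du = dw -> is_derive (0:R) (1:R) w dw.
Proof. by move=> h <- <-. Qed.

Lemma Dsum (R : realType) (I : Type) (r : seq I) (u : I -> R -> R) (du : I -> R) :
  (forall i, is_derive (0:R) (1:R) (u i) (du i)) ->
  is_derive (0:R) (1:R) (fun t => \sum_(i <- r) u i t) (\sum_(i <- r) du i).
Proof.
move=> hu; elim: r => [|i r IH].
  apply: Deq (Dc 0) _ _; first by apply/funext => t; rewrite big_nil.
  by rewrite big_nil.
apply: Deq (DD (hu i) IH) _ _; first by apply/funext => t; rewrite big_cons.
by rewrite big_cons.
Qed.

Lemma DsumF (R : realType) (I : finType) (u : I -> R -> R) (du : I -> R) :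
  (forall i, is_derive (0:R) (1:R) (u i) (du i)) ->
  is_derive (0:R) (1:R) (fun t => \sum_(i : I) u i t) (\sum_(i : I) du i).
Proof. move=> hu; exact: (Dsum (index_enum I) hu). Qed.

Lemma Daff (R : realType) (p q : R) :
  is_derive (0:R) (1:R) (fun t => (1 - t) * p + t * q) (q - p).
Proof.
apply: Deq (DD (DM (DB (Dc 1) (@Did R)) (Dc p)) (DM (@Did R) (Dc q))) _ _ => //.
ring.
Qed.
Lemma mix0 d (T : measurableType d) (R : realType) (P Q : probability T R) :
  mixEx P Q 0 = Ex P.
Proof. by apply/funext => h; rewrite /mixEx subr0 mul1r mul0r addr0. Qed.

Definition dlt d (T : measurableType d) (R : realType) (P Q : probability T R) h :=
  Ex Q h - Ex P h.
Definition rat' d (T : measurableType d) (R : realType) (P Q : probability T R) h1 h2 :=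
  (dlt P Q h1 - Ex P h1 / Ex P h2 * dlt P Q h2) / Ex P h2.

Lemma Dmix d (T : measurableType d) (R : realType) (P Q : probability T R) h :
  is_derive (0:R) (1:R) (fun t => mixEx P Q t h) (dlt P Q h).
Proof. exact: Daff. Qed.
Arguments Dmix {d T R} P Q h.

Lemma Drat d (T : measurableType d) (R : realType) (P Q : probability T R) h1 h2 :
  Ex P h2 != 0 ->
  is_derive (0:R) (1:R) (fun t => mixEx P Q t h1 / mixEx P Q t h2) (rat' P Q h1 h2).
Proof.
move=> h0; apply: Deq (DM (Dmix P Q h1) (DV _ (Dmix P Q h2))) _ _ => //.
  by rewrite /= mix0.
rewrite /= !mix0 /rat'; field; exact: h0.
Qed.
Arguments Drat {d T R} P Q h1 h2.

Definition tau' d (T : measurableType d) (R : realType) (P Q : probability T R)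
  (Vt Wt : finType) (D : data R T Vt Wt) (a b : R) v w :=
  ((rat' P Q (fun t => Yr D t * cellA D v true t) (cellA D v true)
    - rat' P Q (fun t => Yr D t * cellA D v false t) (cellA D v false)
    + (b - a) * rat' P Q (cellVW0 D v w) (cellV0 D v))
   - tauL (Ex P) D a b v w * rat' P Q (cellVW0 D v w) (cellV0 D v)) / nu (Ex P) D v w.

Lemma Dtau d (T : measurableType d) (R : realType) (P Q : probability T R)
  (Vt Wt : finType) (D : data R T Vt Wt) (a b : R) v w :
  Ex P (cellA D v true) != 0 -> Ex P (cellA D v false) != 0 ->
  Ex P (cellV0 D v) != 0 -> nu (Ex P) D v w != 0 ->
  is_derive (0:R) (1:R) (fun t => tauL (mixEx P Q t) D a b v w) (tau' P Q D a b v w).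
Proof.
move=> h1 h0 hN hnu.
have d1 := Drat P Q (fun t => Yr D t * cellA D v true t) _ h1.
have d0 := Drat P Q (fun t => Yr D t * cellA D v false t) _ h0.
have dn := Drat P Q (cellVW0 D v w) _ hN.
apply: Deq (DM (DB (DB d1 d0) (DM (Dc (b - a)) (DB (Dc 1) dn))) (DV _ dn)) _ _ => //.
  by rewrite /= mix0.
rewrite /= !mix0 /tau' /tauL.
rewrite -/(mu (Ex P) D true v) -/(mu (Ex P) D false v) -/(nu (Ex P) D v w).
field; exact: hnu.
Qed.
Arguments Dtau {d T R} P Q {Vt Wt} D a b v w.

Lemma DGh d (T : measurableType d) (R : realType) (P Q : probability T R)
  (Vt Wt : finType) (D : data R T Vt Wt) (a b : R) (g f m : Vt -> Wt -> R) v w :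
  Ex P (cellA D v true) != 0 -> Ex P (cellA D v false) != 0 ->
  Ex P (cellV0 D v) != 0 -> nu (Ex P) D v w != 0 ->
  is_derive (0:R) (1:R) (fun t => Gh (mixEx P Q t) D a b g f m v w)
    (g v w * (tau' P Q D a b v w * f v w)).
Proof.
move=> h1 h0 hN hnu.
have dt := Dtau P Q D a b v w h1 h0 hN hnu.
apply: Deq (DM (Dc (g v w)) (DB (DB (DD (DD (DM dt (Dc (f v w))) (Dc ((b - a) * f v w)))
   (Dc a)) (Dc b)) (Dc (m v w)))) _ _ => //.
rewrite /=; ring.
Qed.

Lemma Ex_Gh d (T : measurableType d) (R : realType) (X : probability T R)
  (Vt Wt : finType) (D : data R T Vt Wt) (G : Vt -> Wt -> R) : mble D ->
  Ex X (fun s => \sum_(v : Vt) \sum_(w : Wt) G v w * cellVW D v w s) =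
  \sum_(v : Vt) \sum_(w : Wt) G v w * Ex X (cellVW D v w).
Proof.
move=> mD; rewrite Ex_sumF; last first.
  move=> v; apply: gd_sumF => w; apply: gd_mul; [exact: gd_cst | exact: gd_cellVW].
apply: eq_bigr => v _; rewrite Ex_sumF; last first.
  move=> w; apply: gd_mul; [exact: gd_cst | exact: gd_cellVW].
by apply: eq_bigr => w _; rewrite ExZ //; exact: gd_cellVW.
Qed.

Lemma Fpt d (T : measurableType d) (R : realType) (P Q : probability T R)
  (Vt Wt : finType) (D : data R T Vt Wt) (a b : R) (g f m : Vt -> Wt -> R) : mble D ->
  (fun t => Mfun (mixEx P Q t) D a b g f m) =
  (fun t => \sum_(v : Vt) \sum_(w : Wt) Gh (mixEx P Q t) D a b g f m v w *
       ((1 - t) * Ex P (cellVW D v w) + t * Ex Q (cellVW D v w))).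
Proof.
move=> mD; apply/funext => t; rewrite Mfun_pt.
set G := Gh (mixEx P Q t) D a b g f m.
rewrite {1}/mixEx (Ex_Gh P G mD) (Ex_Gh Q G mD) // 2!mulr_sumr -big_split /=.
apply: eq_bigr => v _; rewrite 2!mulr_sumr -big_split /=.
by apply: eq_bigr => w _; ring.
Qed.
Lemma cellVW_dec (R : realType) (T : Type) (Vt Wt : finType) (D : data R T Vt Wt) v w t :
  cellVW D v w t = cellVW1 D v w t + cellVW0 D v w t.
Proof.
rewrite /cellVW /cellVW1 /cellVW0; case: (Er D t);
  by rewrite ?andbT ?andbF /= ?addr0 ?add0r.
Qed.

Lemma cellV_dec (R : realType) (T : Type) (Vt Wt : finType) (D : data R T Vt Wt) v t :
  cellV D v t = cellV1 D v t + cellV0 D v t.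
Proof.
rewrite /cellV /cellV1 /cellV0; case: (Er D t);
  by rewrite ?andbT ?andbF /= ?addr0 ?add0r.
Qed.

Lemma cellV1_dec (R : realType) (T : Type) (Vt Wt : finType) (D : data R T Vt Wt) v t :
  cellV1 D v t = cellA D v true t + cellA D v false t.
Proof.
rewrite /cellV1 /cellA; case: (Er D t); case: (Ar D t);
  by rewrite ?andbT ?andbF /= ?addr0 ?add0r.
Qed.

Lemma ExP_facts (R : realType) d (T : measurableType d) (Vt Wt : finType)
  (D : data R T Vt Wt) (P : probability T R) v w : mble D ->
  (forall a', 0 < Ex P (cellA D v a')) -> 0 < Ex P (cellV0 D v) ->
  0 < nu (Ex P) D v w ->
  Ex P (cellVW1 D v w) / Ex P (cellV1 D v) = nu (Ex P) D v w ->
  [/\ 0 < Ex P (cellV D v), Ex P (cellVW0 D v w) != 0 &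
      Ex P (cellVW D v w) = nu (Ex P) D v w * Ex P (cellV D v)].
Proof.
move=> mD hA hN hnu hW1.
have eV1 : Ex P (cellV1 D v) = Ex P (cellA D v true) + Ex P (cellA D v false).
  rewrite -ExD; try exact: gd_cellA.
  by congr Ex; apply/funext => t; exact: cellV1_dec.
have eV : Ex P (cellV D v) = Ex P (cellV1 D v) + Ex P (cellV0 D v).
  rewrite -ExD; [|exact: gd_cellV1|exact: gd_cellV0].
  by congr Ex; apply/funext => t; exact: cellV_dec.
have eVW : Ex P (cellVW D v w) = Ex P (cellVW1 D v w) + Ex P (cellVW0 D v w).
  rewrite -ExD; [|exact: gd_cellVW1|exact: gd_cellVW0].
  by congr Ex; apply/funext => t; exact: cellVW_dec.
have hA1 := hA true; have hA0 := hA false.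
have pV1 : 0 < Ex P (cellV1 D v) by rewrite eV1; exact: addr_gt0.
have pV : 0 < Ex P (cellV D v) by rewrite eV; exact: addr_gt0.
split => //.
  by apply/eqP => h0; move: hnu; rewrite /nu h0 mul0r ltxx.
rewrite eVW eV.
have -> : Ex P (cellVW1 D v w) = nu (Ex P) D v w * Ex P (cellV1 D v).
  by rewrite -hW1 divfK // gt_eqF.
have -> : Ex P (cellVW0 D v w) = nu (Ex P) D v w * Ex P (cellV0 D v).
  by rewrite /nu divfK // gt_eqF.
by rewrite mulrDr.
Qed.
Theorem theorem2 (R : realType) (d : measure_display) (T : measurableType d)
  (Vt Wt : finType) (p : nat) (D : data R T Vt Wt) (a b : R)
  (h : Vt -> Wt -> R) (mm : 'rV[R]_p -> Vt -> Wt -> R) (beta : 'rV[R]_p)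
  (P : probability T R) :
  (forall v, measurable (Vr D @^-1` [set v])) ->
  (forall w, measurable (Wr D @^-1` [set w])) ->
  (forall e, measurable (Er D @^-1` [set e])) ->
  (forall a', measurable (Ar D @^-1` [set a'])) ->
  measurable_fun setT (Yr D) ->
  (forall t, a <= Yr D t <= b) ->
  (forall v a', 0 < Ex P (cellA D v a')) ->
  (forall v, 0 < Ex P (cellV0 D v)) ->
  (forall v w, 0 < nu (Ex P) D v w) ->
  (* P(W = w | V = v, E = 1) = P(W = w | V = v, E = 0) *)
  (forall v w, Ex P (cellVW1 D v w) / Ex P (cellV1 D v) = nu (Ex P) D v w) ->
  let f := findic (Ex P) D a b in
  forall (Q : probability T R) (i : 'I_p),
    let g := gcomp h mm beta i in
    (fun t => (Mfun (mixEx P Q t) D a b g f (fun v w => mm beta v w)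
               - Mfun (Ex P) D a b g f (fun v w => mm beta v w)) / t)
      @ 0^'+ -->
    Ex Q (phi (Ex P) D a b g f (fun v w => mm beta v w))
      - Ex P (phi (Ex P) D a b g f (fun v w => mm beta v w)).
Proof.
Proof.
move=> hV hW hE hA hY hab hAp hNp hnup hW1 f Q i g.
set m := fun v w => mm beta v w.
have mD : mble D.
  split => //; split => //; exists (`|a| + `|b|) => t.
  have /andP[h1 h2] := hab t.
  have := ler_norm b; have := ler_norm (- a); rewrite normrN => n1 n2.
  have := normr_ge0 a; have := normr_ge0 b => n3 n4.
  rewrite ler_norml; apply/andP; split; lra.
apply: Dlim; last by rewrite mix0.
rewrite (Fpt P Q a b g f m mD).
have dF := DsumF (fun v => DsumF (fun w =>
  DM (DGh Q a b g f m
        (lt0r_neq0 (hAp v true)) (lt0r_neq0 (hAp v false))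
        (lt0r_neq0 (hNp v)) (lt0r_neq0 (hnup v w)))
     (Daff (Ex P (cellVW D v w)) (Ex Q (cellVW D v w))))).
apply: Deq dF _ _ => //.
rewrite (Ex_phi (Ex P) Q a b g f m mD) (Ex_phi (Ex P) P a b g f m mD) /phiL -sumrB.
apply: eq_bigr => v _; rewrite -sumrB; apply: eq_bigr => w _.
have [pV cW0 ->] := ExP_facts mD (hAp v) (hNp v) (hnup v w) (hW1 v w).
have hA1 := lt0r_neq0 (hAp v true); have hA0 := lt0r_neq0 (hAp v false).
have hN := lt0r_neq0 (hNp v); have hV0 := lt0r_neq0 pV.
rewrite /= mix0 /tau' /rat' /dlt /Gh /Kc /tauL /mu /nu /Defs.pi /rho0.
field; by rewrite hN cW0 hA0 hA1 hV0.
Qed.
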